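(* Assume $\mathbb{E} Z<\infty$. Let $L_\infty=\inf_{n\in\mathbb{N}} L_n$. Then $L_\infty$ is finite almost surely. Consequently, the sequences $(R_n)_{n\ge1}$, $(L_n)_{n\ge1}$ and $(\Lambda_n)_{n\ge1}$ are almost surely bounded.
   Context: Let $Z,W,(Z_n)_{n\ge1},(W_n)_{n\ge1}$ be independent, identically distributed random variables taking values in $\mathbb{N}=\{1,2,3,\dots\}$. Define sets $T_n\subset\mathbb{Z}$ recursively by $T_n=\{n\}$ for $n\le 0$ and $T_n=\{n\}\cup T_{n-Z_n}\cup T_{n-W_n}$ for $n\ge1$ (the set of vertices reachable from $n$ in the directed graph on $\mathbb{Z}$ with edges $n\to n-Z_n$ and $n\to n-W_n$ for $n\ge1$). Let $\mathcal{L}_n=T_n\cap\{0,-1,-2,\dots\}$ (the leaves reached from $n$), $R_n=\max\mathcal{L}_n$, $L_n=\min\mathcal{L}_n$, and $\Lambda_n=|\mathcal{L}_n|$. *)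

(* Defs.v *)
From HB Require Import structures.
From mathcomp Require Import all_boot all_order all_algebra finmap.
From mathcomp Require Import all_classical all_reals all_analysis.
Set Implicit Arguments. Unset Strict Implicit. Unset Printing Implicit Defensive.
Import Order.TTheory GRing.Theory Num.Theory.
Local Open Scope classical_set_scope.
Local Open Scope ring_scope.

(* The reachable set T_n of the paper, for one fixed realisation
   z = (Z_n)_n, w = (W_n)_n (functions nat -> nat, used only at n >= 1).
   T_n = {n} for n <= 0 and T_n = {n} ∪ T_{n-Z_n} ∪ T_{n-W_n} for n >= 1.
   The recursion is implemented with a fuel argument k; since Z_n, W_n >= 1
   every step decreases the vertex by at least 1, so fuel `|n| suffices and
   Tset z w `|n| n is exactly T_n (as a list, possibly with repetitions). *)
Fixpoint Tset (z w : nat -> nat) (k : nat) (n : int) : seq int :=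
  match k with
  | 0%N => [:: n]
  | k.+1 => if n <= 0 then [:: n]
            else n :: (Tset z w k (n - (z `|n|%N)%:Z) ++ Tset z w k (n - (w `|n|%N)%:Z))
  end.

Definition Tn (z w : nat -> nat) (n : int) : seq int := Tset z w `|n|%N n.

Definition leaves (z w : nat -> nat) (n : int) : seq int :=
  undup [seq m <- Tn z w n | m <= 0].

(* R_n = max of the leaves, L_n = min of the leaves, Lambda_n = number of leaves
   (the leaf set is nonempty for every n, so the seed 'head 0 s' is irrelevant). *)
Definition Rn (z w : nat -> nat) (n : int) : int :=
  let s := leaves z w n in foldr Num.max (head 0 s) s.
Definition Ln (z w : nat -> nat) (n : int) : int :=
  let s := leaves z w n in foldr Num.min (head 0 s) s.
Definition Lambdan (z w : nat -> nat) (n : int) : nat := size (leaves z w n).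

Definition Linf (R : realType) (z w : nat -> nat) : \bar R :=
  ereal_inf [set ((Ln z w n%:Z)%:~R)%:E | n in [set n : nat | (0 < n)%N]].

Definition mutual_indep d (Omega : measurableType d) (R : realType)
    (P : probability Omega R) (I : choiceType) (X : I -> Omega -> nat) : Prop :=
  forall (F : {fset I}) (B : I -> set nat),
    P (\bigcap_(i in [set` F]) (X i @^-1` B i)) =
      (\prod_(i <- F) P (X i @^-1` B i))%E.

(* Main.v *)
Require Import Defs.
From HB Require Import structures.
From mathcomp Require Import all_boot all_order all_algebra finmap.
From mathcomp Require Import all_classical all_reals all_analysis.
From mathcomp Require Import zify measurable_realfun.
Import Order.TTheory GRing.Theory Num.Theory.
Local Open Scope classical_set_scope.
Local Open Scope ring_scope.

Section Comb.
Variables (z w : nat -> nat) (c : int).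
Hypothesis Hc : forall k : nat, (0 < k)%N -> c <= k%:Z - (z k)%:Z /\ c <= k%:Z - (w k)%:Z.
Hypothesis c0 : c <= 0.

Lemma Tset_lb f : forall v m, m \in Tset z w f v -> Num.min v c <= m.
Proof.
elim: f => [|f IH] v m /=.
  by rewrite inE => /eqP ->; rewrite ge_min lexx.
case: ifP => [_|/negbT v0]; first by rewrite inE => /eqP ->; rewrite ge_min lexx.
rewrite inE mem_cat => /orP[/eqP ->|/orP[] /IH]; first by rewrite ge_min lexx.
- have [H _] := Hc `|v|%N ltac:(lia).
  move=> h; rewrite ge_min; apply/orP; right.
  move: h; rewrite ge_min => /orP[] h; last by [].
  by apply: le_trans h; lia.
- have [_ H] := Hc `|v|%N ltac:(lia).
  move=> h; rewrite ge_min; apply/orP; right.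
  move: h; rewrite ge_min => /orP[] h; last by [].
  by apply: le_trans h; lia.
Qed.
End Comb.

Section Comb2.
Variables (z w : nat -> nat) (c : int).
Hypothesis Hc : forall k : nat, (0 < k)%N -> c <= k%:Z - (z k)%:Z /\ c <= k%:Z - (w k)%:Z.
Hypothesis c0 : c <= 0.

Lemma leaves_b (n : nat) m : (0 < n)%N -> m \in leaves z w n%:Z -> c <= m <= 0.
Proof.
move=> n0; rewrite /leaves mem_undup mem_filter => /andP[m0 /(@Tset_lb z w c Hc)].
rewrite /Tn ge_min m0 andbT => /(_ c0) /orP[] h //; lia.
Qed.

Lemma foldr_min_b (s : seq int) x0 : c <= x0 <= 0 -> (forall m, m \in s -> c <= m <= 0) ->
  c <= foldr Num.min x0 s <= 0.
Proof.
move=> hx; elim: s => [|a s IH] //= H.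
have /andP[h1 h2] := H a (mem_head _ _).
have /andP[h3 h4] : c <= foldr Num.min x0 s <= 0 by apply: IH => m hm; apply: H; rewrite inE hm orbT.
by rewrite le_min ge_min h1 h3 h2.
Qed.

Lemma foldr_max_b (s : seq int) x0 : c <= x0 <= 0 -> (forall m, m \in s -> c <= m <= 0) ->
  c <= foldr Num.max x0 s <= 0.
Proof.
move=> hx; elim: s => [|a s IH] //= H.
have /andP[h1 h2] := H a (mem_head _ _).
have /andP[h3 h4] : c <= foldr Num.max x0 s <= 0 by apply: IH => m hm; apply: H; rewrite inE hm orbT.
by rewrite le_max ge_max h1 h2 h4.
Qed.

Lemma head_b (n : nat) : (0 < n)%N -> c <= head 0 (leaves z w n%:Z) <= 0.
Proof.
move=> n0; case E: (leaves z w n%:Z) => [|a s] /=; first by rewrite c0 lexx.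
have := @leaves_b n a n0; rewrite E mem_head; apply; done.
Qed.

Lemma Rn_b (n : nat) : (0 < n)%N -> `|Rn z w n%:Z| <= - c.
Proof.
move=> n0; have := @foldr_max_b (leaves z w n%:Z) _ (@head_b n n0) (fun m => @leaves_b n m n0).
rewrite /Rn; set x := foldr _ _ _ => /andP[h1 h2].
by rewrite ler0_norm // lerN2.
Qed.

Lemma Ln_b (n : nat) : (0 < n)%N -> `|Ln z w n%:Z| <= - c.
Proof.
move=> n0; have := @foldr_min_b (leaves z w n%:Z) _ (@head_b n n0) (fun m => @leaves_b n m n0).
rewrite /Ln; set x := foldr _ _ _ => /andP[h1 h2].
by rewrite ler0_norm // lerN2.
Qed.

Lemma Ln_lb (n : nat) : (0 < n)%N -> c <= Ln z w n%:Z <= 0.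
Proof. move=> n0; exact: @foldr_min_b (leaves z w n%:Z) _ (@head_b n n0) (fun m => @leaves_b n m n0). Qed.

Lemma Lambda_b (n : nat) : (0 < n)%N -> (Lambdan z w n%:Z <= `|c|.+1)%N.
Proof.
move=> n0; rewrite /Lambdan.
rewrite -(size_iota 0 `|c|.+1) -(size_map (fun i : nat => - i%:Z)).
apply: uniq_leq_size; first exact: undup_uniq.
move=> m hm; have /andP[h1 h2] := @leaves_b n m n0 hm.
apply/mapP; exists `|m|%N; first by rewrite mem_iota; lia.
lia.
Qed.
End Comb2.
Lemma sum_ind (R : realType) (m : nat) :
  (\sum_(k <oo) (((k < m)%N%:R : R)%:E) = (m%:R : R)%:E)%E.
Proof.
rewrite (@nneseries_split R _ 0 m); last by move=> k _; rewrite lee_fin.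
rewrite eseries0; last by move=> i; rewrite add0n => hi _; rewrite ltnNge hi.
rewrite adde0 add0n.
rewrite (eq_big_nat _ _ (F2 := fun=> 1%E)); last by move=> i /andP[_ ->].
elim: m => [|m IH]; first by rewrite big_geq.
by rewrite big_nat_recr //= IH -EFinD -natr1.
Qed.

Section Prob.
Context d (Omega : measurableType d) (R : realType) (P : probability Omega R).
Local Open Scope ereal_scope.

Lemma series_fin (X : nat -> Omega -> nat) (Y : Omega -> nat) :
  (forall (B : set nat), measurable (Y @^-1` B)) ->
  (forall n (B : set nat), (0 < n)%N -> measurable (X n @^-1` B)) ->
  (forall n (B : set nat), (0 < n)%N -> P (X n @^-1` B) = P (Y @^-1` B)) ->
  (\int[P]_x (((Y x)%:R : R)%:E) < +oo)%E ->
  \sum_(k <oo) P (X k.+1 @^-1` [set m | (k < m)%N]) < +oo.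
Proof.
move=> mY mX idX hint.

rewrite (eq_eseriesr (g := fun k => \int[P]_x (((k < Y x)%N%:R : R)%:E))); last first.
  move=> k _; rewrite idX // -(setIT (Y @^-1` _)) -integral_indic //.
  apply: eq_integral => x _; rewrite indicE; congr ((_ : R)%:E); congr (_%:R); congr (nat_of_bool _).
  by apply/idP/idP => h; [exact: set_mem h|exact: mem_set h].
have H := @integral_nneseries _ _ _ P setT measurableT (fun k x => ((k < Y x)%N%:R : R)%:E); simpl in H; rewrite -H //; clear H.
- by under eq_integral do rewrite sum_ind.
- move=> k; have -> : (fun x => (((k < Y x)%N%:R : R)%:E)) = (fun x => (\1_(Y @^-1` [set m | (k < m)%N]) x)%:E).
    apply/funext => x; rewrite indicE; congr ((_ : R)%:E); congr (_%:R); congr (nat_of_bool _).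
    by apply/idP/idP => h; [exact: mem_set h|exact: set_mem h].
  apply/measurable_EFinP; exact: measurable_indic.
Qed.

Lemma ae_eventually (X : nat -> Omega -> nat) (Y : Omega -> nat) :
  (forall (B : set nat), measurable (Y @^-1` B)) ->
  (forall n (B : set nat), (0 < n)%N -> measurable (X n @^-1` B)) ->
  (forall n (B : set nat), (0 < n)%N -> P (X n @^-1` B) = P (Y @^-1` B)) ->
  (\int[P]_x (((Y x)%:R : R)%:E) < +oo)%E ->
  {ae P, forall w, exists N : nat, forall k, (N <= k)%N -> (X k.+1 w <= k)%N}.
Proof.
move=> mY mX idX hint.
pose F k := X k.+1 @^-1` [set m | (k < m)%N].
have mF k : measurable (F k) by exact: mX.
have F0 : P (lim_sup_set F) = 0.
  by apply: lim_sup_set_cvg0 => //; exact: (@series_fin X Y mY mX idX hint).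
exists (lim_sup_set F); split => //.
  by apply: bigcapT_measurable => k; apply: bigcup_measurable => j _.
move=> w /= hw n _; apply: contrapT => H; apply: hw; exists n => k nk.
rewrite leqNgt; apply/negP => hk; apply: H; exists k => //.
Qed.
End Prob.

Lemma bound_c (z w : nat -> nat) N1 N2 :
  (forall k, (N1 <= k)%N -> (z k.+1 <= k)%N) -> (forall k, (N2 <= k)%N -> (w k.+1 <= k)%N) ->
  exists c : int, c <= 0 /\ forall k : nat, (0 < k)%N -> c <= k%:Z - (z k)%:Z /\ c <= k%:Z - (w k)%:Z.
Proof.
move=> h1 h2; set N := maxn N1 N2; set M := (\max_(i < N.+1) (z i + w i))%N.
exists (- M%:Z); split; first by rewrite oppr_le0.
move=> k k0; case: (leqP k N) => hk.
  have := @leq_bigmax _ (fun i : 'I_N.+1 => (z i + w i)%N) (Ordinal (hk : (k < N.+1)%N)).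
  rewrite -/M /= => hM; lia.
have := h1 k.-1 ltac:(lia); have := h2 k.-1 ltac:(lia); rewrite prednK //; lia.
Qed.

Lemma Linf_fin (R : realType) (z w : nat -> nat) (c : int) :
  (forall k : nat, (0 < k)%N -> c <= k%:Z - (z k)%:Z /\ c <= k%:Z - (w k)%:Z) -> c <= 0 ->
  Linf R z w \is a fin_num.
Proof.
move=> Hc c0; rewrite fin_numElt; apply/andP; split.
  apply: (@lt_le_trans _ _ (c%:~R)%:E); first exact: ltNyr.
  apply: le_ereal_inf_tmp => _ [n /= n0 <-]; rewrite lee_fin ler_int.
  by have /andP[] := @Ln_lb z w c Hc c0 n n0.
apply: (@le_lt_trans _ _ (((Ln z w 1%:Z)%:~R : R)%:E)); last exact: ltry.
by apply: ge_ereal_inf; exists ((Ln z w 1%:Z)%:~R)%:E => //; exists 1%N.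
Qed.

Theorem theorem1 (d : measure_display) (Omega : measurableType d) (R : realType)
  (P : probability Omega R) (Z W : nat -> Omega -> nat) :
  (* Z_n, W_n (n >= 1) are random variables ... *)
  (forall n (B : set nat), (0 < n)%N ->
     measurable (Z n @^-1` B) /\ measurable (W n @^-1` B)) ->
  (* ... with values in N = {1,2,3,...} ... *)
  (forall n omega, (0 < n)%N -> (0 < Z n omega)%N /\ (0 < W n omega)%N) ->
  (* ... mutually independent ... *)
  mutual_indep P (fun p : bool * nat => if p.1 then Z p.2.+1 else W p.2.+1) ->
  (* ... and identically distributed (common law that of Z = Z_1) *)
  (forall n (B : set nat), (0 < n)%N ->
     P (Z n @^-1` B) = P (Z 1%N @^-1` B) /\ P (W n @^-1` B) = P (Z 1%N @^-1` B)) ->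
  (* E Z < oo *)
  (\int[P]_x (((Z 1%N x)%:R : R)%:E) < +oo)%E ->
  {ae P, forall omega,
     Linf R (fun n => Z n omega) (fun n => W n omega) \is a fin_num} /\
  {ae P, forall omega, exists M : int, forall n : nat, (0 < n)%N ->
     `|Rn (fun k => Z k omega) (fun k => W k omega) n%:Z| <= M} /\
  {ae P, forall omega, exists M : int, forall n : nat, (0 < n)%N ->
     `|Ln (fun k => Z k omega) (fun k => W k omega) n%:Z| <= M} /\
  {ae P, forall omega, exists M : nat, forall n : nat, (0 < n)%N ->
     (Lambdan (fun k => Z k omega) (fun k => W k omega) n%:Z <= M)%N}.
Proof.
move=> mZW _ _ idZW hint.
have mY B : measurable (Z 1%N @^-1` B) by case: (mZW 1%N B isT).
have hZ := @ae_eventually _ _ R P Z (Z 1%N) mY (fun n B h => (mZW n B h).1)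
  (fun n B h => (idZW n B h).1) hint.
have hW := @ae_eventually _ _ R P W (Z 1%N) mY (fun n B h => (mZW n B h).2)
  (fun n B h => (idZW n B h).2) hint.
have hC : {ae P, forall w, exists c : int, c <= 0 /\ forall k : nat, (0 < k)%N ->
    c <= k%:Z - (Z k w)%:Z /\ c <= k%:Z - (W k w)%:Z}.
  apply: filterS (filterI hZ hW) => w [[N1 h1] [N2 h2]].
  exact: (@bound_c (fun n => Z n w) (fun n => W n w) N1 N2 h1 h2).
split; [|split; [|split]]; apply: filterS hC => w [c [c0 Hc]].
- exact: (@Linf_fin R _ _ c Hc c0).
- by exists (- c) => n n0; exact: (@Rn_b _ _ c Hc c0 n n0).
- by exists (- c) => n n0; exact: (@Ln_b _ _ c Hc c0 n n0).
- by exists `|c|.+1 => n n0; exact: (@Lambda_b _ _ c Hc c0 n n0).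
Qed.
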